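(* Let $\mathcal{L}\subseteq\mathbb{S}^n$ be a regular linear subspace. Every point of $\mathcal{L}^{-1}\cap\mathcal{L}^\perp$ is a non-invertible matrix.
   Context: $\mathbb{S}^n$ denotes the space of complex symmetric $n\times n$ matrices. A linear subspace $\mathcal{L}$ is regular if it contains a full-rank matrix. $\mathcal{L}^\perp=\{\Sigma:\mathrm{tr}(K\Sigma)=0\ \forall K\in\mathcal{L}\}$. The reciprocal variety $\mathcal{L}^{-1}$ is the Zariski closure of the set of inverses of invertible matrices in $\mathcal{L}$. *)

(* Defs.v *)
From HB Require Import structures.
From mathcomp Require Import all_boot all_algebra.
From mathcomp Require Import mpoly.
From mathcomp Require Import reals.
From mathcomp.real_closed Require Import complex.
Set Implicit Arguments. Unset Strict Implicit. Unset Printing Implicit Defensive.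
Import GRing.Theory.
Local Open Scope ring_scope.

Definition symmx (F : nzRingType) (n : nat) (A : 'M[F]_n) : Prop := A^T = A.

Definition in_Sym (F : fieldType) (n : nat) (L : {vspace 'M[F]_n}) : Prop :=
  forall K, K \in L -> symmx K.

Definition regular_subspace (F : fieldType) (n : nat) (L : {vspace 'M[F]_n}) : Prop :=
  exists K, K \in L /\ K \in unitmx.

Definition perp_sym (F : fieldType) (n : nat) (L : {vspace 'M[F]_n})
  (S : 'M[F]_n) : Prop :=
  symmx S /\ forall K, K \in L -> \tr (K *m S) = 0.

Definition mx_eval (F : fieldType) (n : nat) (p : {mpoly F[n * n]})
  (A : 'M[F]_n) : F := p.@[fun i => mxvec A 0 i].

Definition zariski_closure (F : fieldType) (n : nat) (X : 'M[F]_n -> Prop)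
  : 'M[F]_n -> Prop :=
  fun A => forall p : {mpoly F[n * n]},
    (forall B, X B -> mx_eval p B = 0) -> mx_eval p A = 0.

Definition reciprocal_variety (F : fieldType) (n : nat) (L : {vspace 'M[F]_n})
  : 'M[F]_n -> Prop :=
  zariski_closure (fun B => exists2 K, (K \in L) && (K \in unitmx) & B = invmx K).

(* Main.v *)
Require Import Defs.
From HB Require Import structures.
From mathcomp Require Import all_boot all_algebra.
From mathcomp Require Import mpoly.
From mathcomp Require Import reals.
From mathcomp.real_closed Require Import complex.
Local Open Scope ring_scope.
Import GRing.Theory Num.Theory.

Set Implicit Arguments. Unset Strict Implicit.
Section PolyF.
Variables (F : fieldType) (n : nat).

Definition polyf (f : 'M[F]_n -> F) : Prop :=
  exists p : {mpoly F[n * n]}, forall A, mx_eval p A = f A.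

Lemma polyf_ext f g : (forall A, f A = g A) -> polyf f -> polyf g.
Proof. by move=> e [p hp]; exists p => A; rewrite hp e. Qed.

Lemma polyf_const c : polyf (fun _ => c).
Proof. by exists c%:MP => A; rewrite /mx_eval mevalC. Qed.

Lemma polyf_entry i j : polyf (fun A => A i j).
Proof. by exists 'X_(mxvec_index i j) => A; rewrite /mx_eval mevalXU mxvecE. Qed.

Lemma polyf_add f g : polyf f -> polyf g -> polyf (fun A => f A + g A).
Proof. by move=> [p hp] [q hq]; exists (p + q) => A; rewrite /mx_eval mevalD -!/(mx_eval _ _) hp hq. Qed.

Lemma polyf_mul f g : polyf f -> polyf g -> polyf (fun A => f A * g A).
Proof. by move=> [p hp] [q hq]; exists (p * q) => A; rewrite /mx_eval mevalM -!/(mx_eval _ _) hp hq. Qed.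

Lemma polyf_sum (I : Type) (r : seq I) (P : pred I) (G : I -> 'M[F]_n -> F) :
  (forall i, polyf (G i)) -> polyf (fun A => \sum_(i <- r | P i) G i A).
Proof.
move=> hG; elim: r => [|x r IH].
  by apply: polyf_ext (polyf_const 0) => A; rewrite big_nil.
case Px: (P x).
  by apply: polyf_ext (polyf_add (hG x) IH) => A; rewrite big_cons Px.
by apply: polyf_ext IH => A; rewrite big_cons Px.
Qed.

Lemma polyf_prod (I : Type) (r : seq I) (P : pred I) (G : I -> 'M[F]_n -> F) :
  (forall i, polyf (G i)) -> polyf (fun A => \prod_(i <- r | P i) G i A).
Proof.
move=> hG; elim: r => [|x r IH].
  by apply: polyf_ext (polyf_const 1) => A; rewrite big_nil.
case Px: (P x).
  by apply: polyf_ext (polyf_mul (hG x) IH) => A; rewrite big_cons Px.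
by apply: polyf_ext IH => A; rewrite big_cons Px.
Qed.

Lemma polyf_det m (M : 'M[F]_n -> 'M[F]_m) :
  (forall i j, polyf (fun A => M A i j)) -> polyf (fun A => \det (M A)).
Proof.
move=> hM.
apply: polyf_ext; first by move=> A; rewrite /(\det _); reflexivity.
apply: polyf_sum => s; apply: polyf_mul; first exact: polyf_const.
by apply: polyf_prod => i; apply: hM.
Qed.

End PolyF.

Theorem lemma2p6 (R : realType) (n : nat) (Hn : (0 < n)%N)
  (L : {vspace 'M[R[i]]_n})
  (HLsym : in_Sym L) (HLreg : regular_subspace L)
  (S : 'M[R[i]]_n) :
  reciprocal_variety L S -> perp_sym L S -> S \notin unitmx.
Proof.
move=> Hrec [_ Hperp].
have [p hp] : polyf (fun A : 'M[R[i]]_n => \tr (\adj A *m S)).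
  apply: (@polyf_ext _ _ (fun A : 'M[R[i]]_n => \sum_(i < n) \sum_(k < n)
     ((-1) ^+ (k + i) * \det (row' k (col' i A))) * S k i)).
    by move=> A; rewrite /mxtrace; apply: eq_bigr => i _; rewrite mxE;
      apply: eq_bigr => k _; rewrite mxE.
  apply: polyf_sum => i; apply: polyf_sum => k; apply: polyf_mul; last exact: polyf_const.
  apply: polyf_mul; first exact: polyf_const.
  apply: polyf_det => a b.
  apply: (polyf_ext (f := fun A => A (lift k a) (lift i b))); last exact: polyf_entry.
  by move=> A; rewrite !mxE.
have H : \det S * n%:R = 0.
  have := Hrec p; rewrite hp mul_adj_mx.
  rewrite -scalemx1 mxtraceZ mxtrace1; apply.
  move=> B [K /andP [KL Ku] ->]; rewrite hp.
  have e : \adj (invmx K) = \det (invmx K) *: K.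
    have hu : invmx K \in unitmx by rewrite unitmx_inv.
    rewrite -[\adj _]mul1mx -(mulVmx hu) -mulmxA mul_mx_adj invmxK.
    by rewrite mul_mx_scalar.
  by rewrite e -scalemxAl mxtraceZ Hperp // mulr0.
rewrite unitmxE unitfE; apply/negP => /eqP; apply.
move/eqP: H; rewrite mulf_eq0 pnatr_eq0 => /orP [/eqP //|].
by rewrite eqn0Ngt Hn.
Qed.
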